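(* Let $k\ge 4$ be an integer and let $C$ be a circular ordering of the vertex set of the path $P_k$. Then $(P_k,C)$ is $LF$-free if and only if it is a $k$-zigzag.
   Context: A circular ordering of a finite set is obtained by placing its elements at distinct points of a circle. A circularly ordered graph is a graph with a circular ordering of its vertices; isomorphism means a graph isomorphism preserving circular orderings; induced circularly ordered subgraphs are induced subgraphs with the restricted ordering. $LF$ consists of the following circularly ordered graphs (vertices $v_1,v_2,\dots$ clockwise in this order; listed edges are all edges): the triangle on $v_1,v_2,v_3$; on $v_1,\dots,v_4$: edges $v_1v_2,v_2v_3,v_3v_4,v_4v_1$; edges $v_1v_2,v_2v_4,v_4v_3,v_3v_1$; edges $v_1v_2,v_2v_3,v_3v_4$; edges $v_3v_1,v_1v_4,v_4v_2$; edges $v_3v_1,v_3v_2,v_3v_4$. $(P_k,C)$ is $LF$-free if it has no induced circularly ordered subgraph isomorphic to a member of $LF$. Let $Z$ be the circularly ordered graph on $v_1,\dots,v_4$ (clockwise) with edges $v_1v_2,v_2v_4,v_4v_3$, and $Z^\ast$ the one with edges $v_2v_1,v_1v_3,v_3v_4$. A $k$-zigzag is a circular ordering of $P_k$ in which every induced subgraph isomorphic to $P_4$ (with the restricted circular ordering) is isomorphic to $Z$ or $Z^\ast$. *)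

(* Defs.v *)
From mathcomp Require Import all_boot perm.
Set Implicit Arguments. Unset Strict Implicit. Unset Printing Implicit Defensive.

Definition pathadj (k : nat) : rel 'I_k :=
  fun i j => (i.+1 == j :> nat) || (j.+1 == i :> nat).

(* A circular ordering of the vertices of P_k: C v is the position of vertex v
   among k points of a circle, numbered 0..k-1 clockwise. *)
Definition circ_ordering (k : nat) := {perm 'I_k}.

(* A list of distinct positions is in clockwise order iff some rotation of it is
   strictly increasing. *)
Definition cyc_ordered (s : seq nat) : Prop := exists r, sorted ltn (rot r s).

(* A small circularly ordered graph on v_1,...,v_m (clockwise, v_{i+1} is the
   vertex i : 'I_m), given by its edge list with 1-based labels. *)
Definition mkgraph (m : nat) (E : seq (nat * nat)) : rel 'I_m :=
  fun i j => ((i.+1, j.+1) \in E) || ((j.+1, i.+1) \in E).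

Definition copy_on (k : nat) (C : circ_ordering k) (S : {set 'I_k})
    (m : nat) (H : rel 'I_m) : Prop :=
  exists u : 'I_m -> 'I_k,
    [/\ S = [set u i | i : 'I_m],
        cyc_ordered [seq (C (u i) : nat) | i <- enum 'I_m]
      & forall i j, pathadj (u i) (u j) = H i j].

Definition has_copy (k : nat) (C : circ_ordering k) (m : nat) (H : rel 'I_m) : Prop :=
  exists S, copy_on C S H.

Definition LF1 : rel 'I_3 := mkgraph [:: (1,2); (2,3); (1,3)].
Definition LF2 : rel 'I_4 := mkgraph [:: (1,2); (2,3); (3,4); (4,1)].
Definition LF3 : rel 'I_4 := mkgraph [:: (1,2); (2,4); (4,3); (3,1)].
Definition LF4 : rel 'I_4 := mkgraph [:: (1,2); (2,3); (3,4)].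
Definition LF5 : rel 'I_4 := mkgraph [:: (3,1); (1,4); (4,2)].
Definition LF6 : rel 'I_4 := mkgraph [:: (3,1); (3,2); (3,4)].

Definition LF_free (k : nat) (C : circ_ordering k) : Prop :=
  ~ has_copy C LF1 /\ ~ has_copy C LF2 /\ ~ has_copy C LF3 /\
  ~ has_copy C LF4 /\ ~ has_copy C LF5 /\ ~ has_copy C LF6.

Definition Zg : rel 'I_4 := mkgraph [:: (1,2); (2,4); (4,3)].
Definition Zstar : rel 'I_4 := mkgraph [:: (2,1); (1,3); (3,4)].
Definition P4 : rel 'I_4 := mkgraph [:: (1,2); (2,3); (3,4)].

Definition induces_P4 (k : nat) (S : {set 'I_k}) : Prop :=
  exists u : 'I_4 -> 'I_k,
    [/\ injective u, S = [set u i | i : 'I_4]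
      & forall i j, pathadj (u i) (u j) = P4 i j].

Definition zigzag (k : nat) (C : circ_ordering k) : Prop :=
  forall S : {set 'I_k}, induces_P4 S -> copy_on C S Zg \/ copy_on C S Zstar.

(* Main.v *)
Require Import Defs.
From mathcomp Require Import all_boot perm zify.

Definition cyc4 (a b c d : nat) : Prop :=
  (a < b /\ b < c /\ c < d) \/ (b < c /\ c < d /\ d < a) \/
  (c < d /\ d < a /\ a < b) \/ (d < a /\ a < b /\ b < c).

Lemma cyc4P a b c d : cyc_ordered [:: a; b; c; d] <-> cyc4 a b c d.
Proof.
rewrite /cyc4; split.
- case=> r; case: r => [|[|[|[|r]]]]; last rewrite rot_oversize //; rewrite /= => ?; lia.
- case=> [H|[H|[H|H]]]; [exists 0|exists 1|exists 2|exists 3]; rewrite /=; lia.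
Qed.

Definition o0 : 'I_4 := @Ordinal 4 0 isT.
Definition o1 : 'I_4 := @Ordinal 4 1 isT.
Definition o2 : 'I_4 := @Ordinal 4 2 isT.
Definition o3 : 'I_4 := @Ordinal 4 3 isT.

Lemma ord4_cases (i : 'I_4) : i = o0 \/ i = o1 \/ i = o2 \/ i = o3.
Proof.
case: i => [[|[|[|[|i]]]] Hi] //;
[left|right;left|right;right;left|right;right;right]; exact: val_inj.
Qed.

Lemma map_enum4 T (f : 'I_4 -> T) :
  [seq f i | i <- enum 'I_4] = [:: f o0; f o1; f o2; f o3].
Proof.
have -> : enum 'I_4 = [:: o0; o1; o2; o3] by apply: (inj_map val_inj); rewrite val_enum_ord.
by [].
Qed.

Definition mk4 (a b c d : 'I_4) (i : 'I_4) : 'I_4 :=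
  match val i with 0 => a | 1 => b | 2 => c | _ => d end.

Ltac case4 i := case: (ord4_cases i) => [->|[->|[->|->]]].
Ltac inj4 := let i := fresh "i" in let j := fresh "j" in
  move=> i j /(congr1 val); case4 i; case4 j; by [].
Ltac adj4 := let i := fresh "i" in let j := fresh "j" in
  move=> i j; case4 i; case4 j; by [].

Definition conds (H : rel 'I_4) (a b c d : 'I_4) : Prop :=
  P4 a b = H o0 o1 /\ P4 a c = H o0 o2 /\ P4 a d = H o0 o3 /\
  P4 b c = H o1 o2 /\ P4 b d = H o1 o3 /\ P4 c d = H o2 o3.

Ltac solve4 :=
  first [ left; (repeat split); apply: val_inj; done
        | right; (repeat split); apply: val_inj; done ].

Ltac conds_tac :=
  case=> [[|[|[|[|?]]]] ?] //; case=> [[|[|[|[|?]]]] ?] //;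
  case=> [[|[|[|[|?]]]] ?] //; case=> [[|[|[|[|?]]]] ?] //;
  rewrite /conds /=; intuition (try discriminate); solve4.

Lemma conds_Zg a b c d : conds Zg a b c d ->
  (a = o0 /\ b = o1 /\ c = o3 /\ d = o2) \/ (a = o3 /\ b = o2 /\ c = o0 /\ d = o1).
Proof. move: a b c d; conds_tac. Qed.
Lemma conds_Zs a b c d : conds Zstar a b c d ->
  (a = o1 /\ b = o0 /\ c = o2 /\ d = o3) \/ (a = o2 /\ b = o3 /\ c = o1 /\ d = o0).
Proof. move: a b c d; conds_tac. Qed.
Lemma conds_LF4 a b c d : conds LF4 a b c d ->
  (a = o0 /\ b = o1 /\ c = o2 /\ d = o3) \/ (a = o3 /\ b = o2 /\ c = o1 /\ d = o0).
Proof. move: a b c d; conds_tac. Qed.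
Lemma conds_LF5 a b c d : conds LF5 a b c d ->
  (a = o1 /\ b = o3 /\ c = o0 /\ d = o2) \/ (a = o2 /\ b = o0 /\ c = o3 /\ d = o1).
Proof. move: a b c d; conds_tac. Qed.

Lemma im_comp k (v : 'I_4 -> 'I_k) (m : 'I_4 -> 'I_4) : injective m ->
  [set v (m i) | i : 'I_4] = [set v i | i : 'I_4].
Proof.
move=> Hm; apply/setP => x; apply/imsetP/imsetP => [[i _ ->]|[i _ ->]].
  by exists (m i).
have : i \in [set m j | j : 'I_4].
  have E : [set m j | j : 'I_4] = [set: 'I_4].
    by apply/eqP; rewrite eqEcard subsetT /= cardsT card_imset.
  by rewrite E inE.
by case/imsetP => j _ ->; exists j.
Qed.

Lemma copy_sig k (C : circ_ordering k) (u : 'I_4 -> 'I_k) H :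
  (forall i j, pathadj (u i) (u j) = P4 i j) -> copy_on C [set u i | i : 'I_4] H ->
  exists a b c d, conds H a b c d /\
    cyc4 (C (u a)) (C (u b)) (C (u c)) (C (u d)).
Proof.
move=> Hu [v [HS Hc Hv]].
have : forall j, exists i, v j = u i.
  move=> j; have : v j \in [set v i | i : 'I_4] by apply: imset_f.
  by rewrite -HS => /imsetP[i _ ->]; exists i.
case/fin_all_exists => s Hs.
have Hadj i j : H i j = P4 (s i) (s j) by rewrite -Hv !Hs Hu.
exists (s o0), (s o1), (s o2), (s o3); split.
  by rewrite /conds !Hadj.
by move: Hc; rewrite map_enum4 !Hs => /cyc4P.
Qed.

Lemma copy_of k (C : circ_ordering k) (u : 'I_4 -> 'I_k) H (s : 'I_4 -> 'I_4) :
  (forall i j, pathadj (u i) (u j) = P4 i j) -> injective s ->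
  (forall i j, P4 (s i) (s j) = H i j) ->
  cyc4 (C (u (s o0))) (C (u (s o1))) (C (u (s o2))) (C (u (s o3))) ->
  copy_on C [set u i | i : 'I_4] H.
Proof.
move=> Hu Hs HH Hc; exists (u \o s); split.
- by rewrite -(@im_comp _ u s Hs).
- by rewrite map_enum4; apply/cyc4P.
- by move=> i j /=; rewrite Hu HH.
Qed.

Lemma inj4 (f : 'I_4 -> nat) : cyc4 (f o0) (f o1) (f o2) (f o3) -> injective f.
Proof.
move=> Hc i j; case4 i; case4 j; rewrite //= => E; exfalso; rewrite /cyc4 in Hc; lia.
Qed.

Lemma cyc4_rot a b c d : cyc4 a b c d -> cyc4 b c d a.
Proof. rewrite /cyc4; tauto. Qed.

Ltac rot4 H := first [exact H | apply: cyc4_rot; first [exact H | apply: cyc4_rot;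
   first [exact H | apply: cyc4_rot; exact H]]].

Definition cyc4b (a b c d : nat) : bool :=
  [|| [&& a < b, b < c & c < d], [&& b < c, c < d & d < a],
      [&& c < d, d < a & a < b] | [&& d < a, a < b & b < c]].

Lemma cyc4bP a b c d : cyc4b a b c d -> cyc4 a b c d.
Proof. rewrite /cyc4b /cyc4 => H; lia. Qed.

Lemma six a b c d : a <> b -> a <> c -> a <> d -> b <> c -> b <> d -> c <> d ->
 cyc4 a b c d \/ cyc4 a b d c \/ cyc4 a c b d \/ cyc4 a c d b \/ cyc4 a d b c \/ cyc4 a d c b.
Proof.
move=> ab ac ad bc bd cd.
have : [|| cyc4b a b c d, cyc4b a b d c, cyc4b a c b d, cyc4b a c d b, cyc4b a d b c
         | cyc4b a d c b].
  rewrite /cyc4b.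
  Time (case: (ltngtP a b) => h1; case: (ltngtP a c) => h2; case: (ltngtP a d) => h3;
  case: (ltngtP b c) => h4; case: (ltngtP b d) => h5; case: (ltngtP c d) => h6 => //=;
  exfalso; lia).
by case/orP=> [/cyc4bP|/orP[/cyc4bP|/orP[/cyc4bP|/orP[/cyc4bP|/orP[/cyc4bP|/cyc4bP]]]]];
  tauto.
Qed.
Lemma LF4_Z (f : 'I_4 -> nat) :
     (exists a b c d, conds LF4 a b c d /\ cyc4 (f a) (f b) (f c) (f d)) ->
     (exists a b c d, (conds Zg a b c d \/ conds Zstar a b c d) /\
                      cyc4 (f a) (f b) (f c) (f d)) -> False.
Proof.
move=> [a [b [c [d [/conds_LF4 H1 C1]]]]] [a' [b' [c' [d' [H2 C2]]]]].
Time (case: H2 => [/conds_Zg|/conds_Zs] H2;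
case: H1 => [[? [? [? ?]]]|[? [? [? ?]]]]; subst;
case: H2 => [[? [? [? ?]]]|[? [? [? ?]]]]; subst;
rewrite /cyc4 in C1 C2; lia).
Qed.

Lemma LF5_Z (f : 'I_4 -> nat) :
     (exists a b c d, conds LF5 a b c d /\ cyc4 (f a) (f b) (f c) (f d)) ->
     (exists a b c d, (conds Zg a b c d \/ conds Zstar a b c d) /\
                      cyc4 (f a) (f b) (f c) (f d)) -> False.
Proof.
move=> [a [b [c [d [/conds_LF5 H1 C1]]]]] [a' [b' [c' [d' [H2 C2]]]]].
Time (case: H2 => [/conds_Zg|/conds_Zs] H2;
case: H1 => [[? [? [? ?]]]|[? [? [? ?]]]]; subst;
case: H2 => [[? [? [? ?]]]|[? [? [? ?]]]]; subst;
rewrite /cyc4 in C1 C2; lia).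
Qed.

Lemma noLF k (C : circ_ordering k) (Z : zigzag C) H (m : 'I_4 -> 'I_4) :
  injective m -> (forall i j, H (m i) (m j) = P4 i j) ->
  (forall f : 'I_4 -> nat,
     (exists a b c d, conds H a b c d /\ cyc4 (f a) (f b) (f c) (f d)) ->
     (exists a b c d, (conds Zg a b c d \/ conds Zstar a b c d) /\
                      cyc4 (f a) (f b) (f c) (f d)) -> False) ->
  ~ has_copy C H.
Proof.
move=> minj Hm Hcon [S [v [HS Hc Hv]]].
pose u : 'I_4 -> 'I_k := fun i => v (m i).
have Hu : forall i j, pathadj (u i) (u j) = P4 i j by move=> i j; rewrite /u Hv Hm.
have HS' : S = [set u i | i : 'I_4] by rewrite HS /u (@im_comp _ v m minj).
have Hc4 := Hc; move: Hc4; rewrite map_enum4 => /cyc4P Hc4.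
have vinj : injective v.
  move=> i j E; apply: (@inj4 (fun i => (C (v i) : nat)) Hc4); by rewrite /= E.
have uinj : injective u by move=> i j /vinj /minj.
have cp : copy_on C [set u i | i : 'I_4] H by rewrite -HS'; exists v.
have IP : induces_P4 S by exists u.
apply: (Hcon (fun i => (C (u i) : nat))); first exact: (@copy_sig _ C u H Hu cp).
rewrite HS' in IP.
case: (Z _ IP) => /(@copy_sig _ C u _ Hu) [a [b [c [d [Hab Hcyc]]]]];
  exists a, b, c, d; split => //; [left|right] => //.
Qed.

Lemma distinct_of k (C : circ_ordering k) (u : 'I_4 -> 'I_k) :
  cyc_ordered [seq (C (u i) : nat) | i <- enum 'I_4] ->
  forall i j, i != j -> (u i : nat) <> u j.
Proof.
rewrite map_enum4 => /cyc4P Hc i j /eqP ij E; apply: ij.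
apply: (@inj4 (fun i => (C (u i) : nat)) Hc); by rewrite /= (val_inj E).
Qed.

Theorem mainTheorem12 (k : nat) (hk : 4 <= k) (C : circ_ordering k) :
  LF_free C <-> zigzag C.
Proof.
split.
- move=> [_ [_ [_ [n4 [n5 _]]]]] S [u [uinj -> Hu]].
  have dist : forall i j, (C (u i) : nat) = C (u j) -> i = j
    by move=> i j /val_inj/perm_inj/uinj.
  have := @six (C (u o0)) (C (u o1)) (C (u o2)) (C (u o3)).
  have nd : forall i j, i != j -> (C (u i) : nat) <> C (u j)
    by move=> i j /eqP ij /dist.
  move=> /(_ (nd o0 o1 isT) (nd o0 o2 isT) (nd o0 o3 isT) (nd o1 o2 isT) (nd o1 o3 isT) (nd o2 o3 isT)).
  case=> [H|[H|[H|[H|[H|H]]]]].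
  + exfalso; apply: n4; exists [set u i | i : 'I_4].
    apply: (@copy_of _ C u LF4 (mk4 o0 o1 o2 o3) Hu); [inj4|adj4|rot4 H].
  + left; apply: (@copy_of _ C u Zg (mk4 o0 o1 o3 o2) Hu); [inj4|adj4|rot4 H].
  + exfalso; apply: n5; exists [set u i | i : 'I_4].
    apply: (@copy_of _ C u LF5 (mk4 o1 o3 o0 o2) Hu); [inj4|adj4|rot4 H].
  + right; apply: (@copy_of _ C u Zstar (mk4 o1 o0 o2 o3) Hu); [inj4|adj4|rot4 H].
  + exfalso; apply: n5; exists [set u i | i : 'I_4].
    apply: (@copy_of _ C u LF5 (mk4 o2 o0 o3 o1) Hu); [inj4|adj4|rot4 H].
  + exfalso; apply: n4; exists [set u i | i : 'I_4].
    apply: (@copy_of _ C u LF4 (mk4 o3 o2 o1 o0) Hu); [inj4|adj4|rot4 H].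
- move=> Z; split; last split; last split; last split; last split.
  + case=> S [u [_ _ Hu]].
    have := Hu (@Ordinal 3 0 isT) (@Ordinal 3 1 isT).
    have := Hu (@Ordinal 3 1 isT) (@Ordinal 3 2 isT).
    have := Hu (@Ordinal 3 0 isT) (@Ordinal 3 2 isT).
    rewrite /pathadj /= => /orP[/eqP h1|/eqP h1] /orP[/eqP h2|/eqP h2] /orP[/eqP h3|/eqP h3]; lia.
  + case=> S [u [_ /distinct_of D Hu]].
    have d02 := D o0 o2 isT; have d13 := D o1 o3 isT.
    have := Hu o0 o1; have := Hu o1 o2; have := Hu o2 o3; have := Hu o3 o0.
    rewrite /pathadj /= => /orP[/eqP h1|/eqP h1] /orP[/eqP h2|/eqP h2] /orP[/eqP h3|/eqP h3] /orP[/eqP h4|/eqP h4]; lia.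
  + case=> S [u [_ /distinct_of D Hu]].
    have d03 := D o0 o3 isT; have d12 := D o1 o2 isT.
    have := Hu o0 o1; have := Hu o1 o3; have := Hu o3 o2; have := Hu o2 o0.
    rewrite /pathadj /= => /orP[/eqP h1|/eqP h1] /orP[/eqP h2|/eqP h2] /orP[/eqP h3|/eqP h3] /orP[/eqP h4|/eqP h4]; lia.
  + apply: (@noLF _ C Z LF4 (mk4 o0 o1 o2 o3)); [inj4|adj4|exact: LF4_Z].
  + apply: (@noLF _ C Z LF5 (mk4 o2 o0 o3 o1)); [inj4|adj4|exact: LF5_Z].
  + case=> S [u [_ /distinct_of D Hu]].
    have d01 := D o0 o1 isT; have d03 := D o0 o3 isT; have d13 := D o1 o3 isT.
    have := Hu o2 o0; have := Hu o2 o1; have := Hu o2 o3.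
    rewrite /pathadj /= => /orP[/eqP h1|/eqP h1] /orP[/eqP h2|/eqP h2] /orP[/eqP h3|/eqP h3]; lia.
Qed.
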